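(* Let $C\subseteq\mathbb{R}^a$ be a polyhedral convex cone and let $\mathcal{Y}_{out}$ be the set of nonzero vertices of the polytope $C\cap B_1$. Let $\mathcal{Y}_{in}\subseteq C$ be a finite nonempty set of vectors with $\|r\|=1$ for all $r\in\mathcal{Y}_{in}$, and let $\delta>0$. Suppose that for every $d\in\mathcal{Y}_{out}$ there exists $r\in\mathcal{Y}_{in}$ with $\|d-r\|\le\delta$. Then $$d_H\big(C\cap B_1,\ \operatorname{cone}\mathcal{Y}_{in}\cap B_1\big)\le\delta.$$
   Context: $\|\cdot\|$ denotes the $\ell_1$ norm and $B_1=\{y\in\mathbb{R}^a:\|y\|\le1\}$. $\operatorname{cone}\mathcal{Y}$ is the convex conic hull of $\mathcal{Y}$. The Hausdorff distance is $d_H(X,Y)=\max\{\sup_{x\in X}\inf_{y\in Y}\|x-y\|,\sup_{y\in Y}\inf_{x\in X}\|x-y\|\}$. *)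

(* Defs.v *)
From mathcomp Require Import all_boot all_order all_algebra.
From mathcomp Require Import boolp classical_sets reals.
Set Implicit Arguments. Unset Strict Implicit. Unset Printing Implicit Defensive.
Import Order.TTheory GRing.Theory Num.Theory.
Local Open Scope ring_scope.
Local Open Scope classical_set_scope.

Section Defs.
Variables (R : realType) (a : nat).
Notation vec := 'rV[R]_a.

Definition norm1 (x : vec) : R := \sum_(i < a) `|x 0 i|.

Definition B1 : set vec := [set x | norm1 x <= 1].

Definition polyhedral_cone (C : set vec) : Prop :=
  exists (m : nat) (A : 'M[R]_(m, a)),
    C = [set x | forall i : 'I_m, (A *m x^T) i 0 <= 0].

Definition extreme_point (S : set vec) (x : vec) : Prop :=
  S x /\ forall (y z : vec) (t : R), S y -> S z -> 0 < t -> t < 1 ->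
    x = t *: y + (1 - t) *: z -> y = x /\ z = x.

Definition cone_hull (Y : seq vec) : set vec :=
  [set x | exists lam : 'I_(size Y) -> R,
     (forall i, 0 <= lam i) /\ x = \sum_(i < size Y) lam i *: Y`_i].

Definition dist_set (x : vec) (Y : set vec) : R :=
  inf [set norm1 (x - y) | y in Y].

Definition hausdorff (X Y : set vec) : R :=
  Num.max (sup [set dist_set x Y | x in X]) (sup [set dist_set y X | y in Y]).
End Defs.

(* Main.v *)
Require Import Defs.
From mathcomp Require Import all_boot all_order all_algebra.
From mathcomp Require Import boolp classical_sets reals.
From mathcomp Require Import ring lra.
Set Implicit Arguments. Unset Strict Implicit. Unset Printing Implicit Defensive.
Import Order.TTheory GRing.Theory Num.Theory.
Local Open Scope ring_scope.
Local Open Scope classical_set_scope.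

Definition lf {R : realType} {a : nat} (g : 'I_a -> R) (x : 'rV[R]_a) : R :=
  \sum_j g j * x 0 j.

Lemma lfD {R : realType} {a : nat} (g : 'I_a -> R) x y : lf g (x + y) = lf g x + lf g y.
Proof. rewrite /lf -big_split; apply: eq_bigr => j _; by rewrite mxE mulrDr. Qed.
Lemma lfZ {R : realType} {a : nat} (g : 'I_a -> R) c x : lf g (c *: x) = c * lf g x.
Proof. rewrite /lf mulr_sumr; apply: eq_bigr => j _; by rewrite mxE mulrCA. Qed.
Lemma lfN {R : realType} {a : nat} (g : 'I_a -> R) x : lf g (- x) = - lf g x.
Proof. rewrite /lf -sumrN; apply: eq_bigr => j _; by rewrite mxE mulrN. Qed.
Lemma lf0 {R : realType} {a : nat} (g : 'I_a -> R) : lf g 0 = 0.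
Proof. by rewrite /lf big1 // => j _; rewrite mxE mulr0. Qed.

Lemma norm1_ge0 {R : realType} {a : nat} (x : 'rV[R]_a) : 0 <= norm1 x.
Proof. by apply: sumr_ge0 => j _. Qed.
Lemma norm1D {R : realType} {a : nat} (x y : 'rV[R]_a) : norm1 (x + y) <= norm1 x + norm1 y.
Proof. rewrite /norm1 -big_split; apply: ler_sum => j _; rewrite mxE ler_normD //. Qed.
Lemma norm1Z {R : realType} {a : nat} c (x : 'rV[R]_a) : norm1 (c *: x) = `|c| * norm1 x.
Proof. rewrite /norm1 mulr_sumr; apply: eq_bigr => j _; rewrite mxE normrM //. Qed.
Lemma norm1N {R : realType} {a : nat} (x : 'rV[R]_a) : norm1 (- x) = norm1 x.
Proof. rewrite /norm1; apply: eq_bigr => j _; rewrite mxE normrN //. Qed.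
Lemma norm10 {R : realType} {a : nat} : norm1 (0 : 'rV[R]_a) = 0.
Proof. by rewrite /norm1 big1 // => j _; rewrite mxE normr0. Qed.
Lemma norm1_eq0 {R : realType} {a : nat} (x : 'rV[R]_a) : norm1 x = 0 -> x = 0.
Proof.
move=> H; apply/rowP => j; rewrite mxE.
have := @psumr_eq0P R _ xpredT (fun j => `|x 0 j|) (fun _ _ => normr_ge0 _) H j isT.
move=> /eqP; rewrite normr_eq0 => /eqP //.
Qed.
Lemma norm1B {R : realType} {a : nat} (x y : 'rV[R]_a) : norm1 x - norm1 y <= norm1 (x - y).
Proof.
have := norm1D (x - y) y; rewrite subrK; lra.
Qed.

Definition PP {R : realType} {a : nat} {I : finType} (g : I -> 'I_a -> R) (h : I -> R) : set 'rV[R]_a :=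
  [set x | forall i, lf (g i) x <= h i].
Definition slack {R : realType} {a : nat} {I : finType} (g : I -> 'I_a -> R) (h : I -> R) (x : 'rV[R]_a) :=
  #|[set i | lf (g i) x < h i]%SET|.

Lemma step {R : realType} {a : nat} {I : finType} (g : I -> 'I_a -> R) (h : I -> R) :
  (forall x, PP g h x -> norm1 x <= 1) ->
  forall x v, PP g h x -> v != 0 -> (forall i, lf (g i) x = h i -> lf (g i) v = 0) ->
  exists2 s, 0 < s & PP g h (x + s *: v) /\ (slack g h (x + s *: v) < slack g h x)%N.
Proof.
move=> bnd x v Px v0 tight.
have nv : 0 < norm1 v.
  rewrite lt_neqAle norm1_ge0 andbT eq_sym; apply/eqP => /norm1_eq0 /eqP; exact/negP.
have [i1 Hi1] : exists i, 0 < lf (g i) v.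
  apply: contrapT => N.
  have Hle : forall i, lf (g i) v <= 0.
    move=> i; rewrite leNgt; apply/negP => H; apply: N; by exists i.
  pose s := 3 / norm1 v.
  have Ps : PP g h (x + s *: v).
    move=> i; rewrite lfD lfZ; have := Px i; have := Hle i.
    have : 0 <= s by rewrite /s divr_ge0 // ltW.
    move=> s0 h1 h2; nra.
  have E : x + s *: v - x = s *: v by rewrite addrC addKr.
  have := bnd _ Ps; have := bnd _ Px; have := norm1D (x + s *: v) (- x).
  rewrite norm1N E norm1Z ger0_norm; last by rewrite /s divr_ge0 // ltW.
  rewrite /s mulfVK; last by rewrite gt_eqF.
  lra.
pose F i := (h i - lf (g i) x) / lf (g i) v.
pose S := [pred i | 0 < lf (g i) v].
have Si1 : S i1 by [].
case: (arg_minP F Si1) => i0 Si0 Hmin.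
have Si0' : 0 < lf (g i0) v by exact: Si0.
have sl0 : lf (g i0) x < h i0.
  rewrite lt_neqAle Px andbT; apply/eqP => E; move: (tight _ E) Si0'; move=> ->; rewrite ltxx.
  done.
have s0 : 0 < F i0 by rewrite /F divr_gt0 // subr_gt0.
exists (F i0) => //.
have Pn : PP g h (x + F i0 *: v).
  move=> i; rewrite lfD lfZ.
  case: (ltP 0 (lf (g i) v)) => Hv.
    have := Hmin i Hv; rewrite /F ler_pdivlMr // => H1.
    have : h i0 - lf (g i0) x = F i0 * lf (g i0) v by rewrite /F mulfVK // gt_eqF.
    move=> _; rewrite -ler_pdivlMr // in H1.
    rewrite -(ler_pM2r Hv) in H1.
    move: H1; rewrite mulfVK ?gt_eqF //; lra.
  have := Px i; nra.
split => //.
have Hp : ([set i | lf (g i) (x + F i0 *: v) < h i] \proper [set i | lf (g i) x < h i])%SET.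
  apply/properP; split.
  apply/fintype.subsetP => i; rewrite !inE => H; rewrite lt_neqAle Px andbT.
  apply/eqP => E; move: H; rewrite lfD lfZ (tight _ E) mulr0 addr0 E ltxx //.
exists i0; rewrite !inE //.
rewrite lfD lfZ /F mulfVK ?gt_eqF // addrC subrK ltxx //.
exact: proper_card.
Qed.

Definition decomp {R : realType} {a : nat} (S : set 'rV[R]_a) (x : 'rV[R]_a) :=
  exists l : seq (R * 'rV[R]_a),
    (forall p, p \in l -> 0 <= p.1 /\ extreme_point S p.2) /\
    \sum_(p <- l) p.1 = 1 /\ x = \sum_(p <- l) p.1 *: p.2.

Lemma sum_scale {R : realType} {a : nat} (c : R) (l : seq (R * 'rV[R]_a)) :
  \sum_(p <- map (fun p => (c * p.1, p.2)) l) p.1 *: p.2 = c *: \sum_(p <- l) p.1 *: p.2.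
Proof. rewrite big_map scaler_sumr; apply: eq_bigr => p _ /=; by rewrite scalerA. Qed.
Lemma sum_scale1 {R : realType} {a : nat} (c : R) (l : seq (R * 'rV[R]_a)) :
  \sum_(p <- map (fun p => (c * p.1, p.2)) l) p.1 = c * \sum_(p <- l) p.1.
Proof. by rewrite big_map mulr_sumr. Qed.

Lemma decomp_all {R : realType} {a : nat} {I : finType} (g : I -> 'I_a -> R) (h : I -> R) :
  (forall x, PP g h x -> norm1 x <= 1) ->
  forall x, PP g h x -> decomp (PP g h) x.
Proof.
move=> bnd.
suff H : forall n x, slack g h x = n -> PP g h x -> decomp (PP g h) x.
  by move=> x; exact: H.
elim/ltn_ind => n IH x sx Px.
case: (pselect (extreme_point (PP g h) x)) => [ext|next].
  exists [:: (1, x)]; split; last by rewrite !big_cons !big_nil addr0 scale1r addr0.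
  by move=> p; rewrite inE => /eqP -> /=; split.
have [y [z [t [Py [Pz [t0 [t1 [ex nyz]]]]]]]] : exists y z t, PP g h y /\ PP g h z /\
   0 < t /\ t < 1 /\ x = t *: y + (1 - t) *: z /\ ~ (y = x /\ z = x).
  apply: contrapT => N; apply: next; split => // y z t Py Pz t0 t1 e.
  apply: contrapT => N2; apply: N; by exists y, z, t.
pose v := y - x.
have v0 : v != 0.
  apply/eqP => /eqP; rewrite subr_eq0 => /eqP yx; apply: nyz; split => //.
  move: (ex); rewrite yx => ex'.
  have E2 : (1 - t) *: z = x - t *: x by rewrite {1}ex' addrAC subrr add0r.
  have : (1 - t) *: z = (1 - t) *: x by rewrite E2 scalerBl scale1r.
  move/eqP; rewrite -subr_eq0 -scalerBr scaler_eq0 => /orP [/eqP E|].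
    by exfalso; clear -E t1; lra.
  by rewrite subr_eq0 => /eqP.
have tight : forall i, lf (g i) x = h i -> lf (g i) v = 0.
  move=> i E; have := Py i; have := Pz i.
  have Ex : lf (g i) x = t * lf (g i) y + (1 - t) * lf (g i) z by rewrite {1}ex lfD !lfZ.
  rewrite /v lfD lfN; move: Ex; rewrite E; move=> Ex h1 h2.
  have : lf (g i) y = h i by nra.
  move=> ->; by rewrite subrr.
have tightN : forall i, lf (g i) x = h i -> lf (g i) (- v) = 0.
  by move=> i E; rewrite lfN tight // oppr0.
have v0' : - v != 0 by rewrite oppr_eq0.
have [s1 s10 [P1 sl1]] := step bnd Px v0 tight.
have [s2 s20 [P2 sl2]] := step bnd Px v0' tightN.
rewrite sx in sl1 sl2.
have [l1 [H1 [W1 X1]]] := IH _ sl1 _ erefl P1.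
have [l2 [H2 [W2 X2]]] := IH _ sl2 _ erefl P2.
pose al := s2 / (s1 + s2); pose be := s1 / (s1 + s2).
have al0 : 0 <= al by rewrite /al divr_ge0 // ltW // addr_gt0.
have be0 : 0 <= be by rewrite /be divr_ge0 // ltW // addr_gt0.
exists (map (fun p => (al * p.1, p.2)) l1 ++ map (fun p => (be * p.1, p.2)) l2).
split; [|split].
- move=> p; rewrite mem_cat => /orP [] /mapP [q qin ->] /=.
    by have [q0 qe] := H1 _ qin; split => //; rewrite mulr_ge0.
  by have [q0 qe] := H2 _ qin; split => //; rewrite mulr_ge0.
- rewrite big_cat /= !sum_scale1 W1 W2 !mulr1 /al /be.
  have : s1 + s2 != 0 by rewrite gt_eqF // addr_gt0.
  move=> nz; field.
  done.
- rewrite big_cat /= !sum_scale -X1 -X2.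
  have nz : s1 + s2 != 0 by rewrite gt_eqF // addr_gt0.
  apply/rowP => j; rewrite !mxE /al /be; field => //.
Qed.

Lemma cone0 {R : realType} {a : nat} (Y : seq 'rV[R]_a) : cone_hull Y 0.
Proof. exists (fun _ => 0); split => //; by rewrite big1 // => i _; rewrite scale0r. Qed.
Lemma coneD {R : realType} {a : nat} (Y : seq 'rV[R]_a) y1 y2 :
  cone_hull Y y1 -> cone_hull Y y2 -> cone_hull Y (y1 + y2).
Proof.
move=> [l1 [h1 ->]] [l2 [h2 ->]]; exists (fun i => l1 i + l2 i); split.
  by move=> i; rewrite addr_ge0.
by rewrite -big_split; apply: eq_bigr => i _; rewrite scalerDl.
Qed.
Lemma coneZ {R : realType} {a : nat} (Y : seq 'rV[R]_a) c y :
  0 <= c -> cone_hull Y y -> cone_hull Y (c *: y).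
Proof.
move=> c0 [l [h ->]]; exists (fun i => c * l i); split.
  by move=> i; rewrite mulr_ge0.
by rewrite scaler_sumr; apply: eq_bigr => i _; rewrite scalerA.
Qed.
Lemma cone_mem {R : realType} {a : nat} (Y : seq 'rV[R]_a) r : r \in Y -> cone_hull Y r.
Proof.
move=> rin; have hi : (index r Y < size Y)%N by rewrite index_mem.
pose i0 := Ordinal hi.
exists (fun i => (i == i0)%:R); split; first by move=> i; rewrite ler0n.
rewrite (bigD1 i0) //= big1 ?addr0; first by rewrite eqxx scale1r nth_index.
by move=> i /negbTE ->; rewrite scale0r.
Qed.
Lemma cone_sum {R : realType} {a : nat} (Y : seq 'rV[R]_a) (w : R * 'rV[R]_a -> 'rV[R]_a)
  (l : seq (R * 'rV[R]_a)) :
  (forall p, p \in l -> 0 <= p.1 /\ cone_hull Y (w p)) ->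
  cone_hull Y (\sum_(p <- l) p.1 *: w p).
Proof.
elim: l => [|p l IH] H; first by rewrite big_nil; exact: cone0.
rewrite big_cons; apply: coneD.
  by have [p0 cp] := H p (mem_head _ _); exact: coneZ.
by apply: IH => q qin; apply: H; rewrite inE qin orbT.
Qed.
Lemma norm_sum {R : realType} {a : nat} (w : R * 'rV[R]_a -> 'rV[R]_a)
  (l : seq (R * 'rV[R]_a)) :
  (forall p, p \in l -> 0 <= p.1) ->
  norm1 (\sum_(p <- l) p.1 *: w p) <= \sum_(p <- l) p.1 * norm1 (w p).
Proof.
elim: l => [|p l IH] H; first by rewrite !big_nil norm10.
rewrite !big_cons; apply: le_trans (norm1D _ _) _.
rewrite norm1Z ger0_norm; last exact: H (mem_head _ _).
rewrite lerD2l; apply: IH => q qin; apply: H; by rewrite inE qin orbT.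
Qed.

Definition gC {R : realType} {a m : nat} (A : 'M[R]_(m, a)) (i : ('I_m + {ffun 'I_a -> bool})%type) : 'I_a -> R :=
  match i with inl k => fun j => A k j | inr s => fun j => if s j then 1 else -1 end.
Definition hC {R : realType} {a m : nat} (i : ('I_m + {ffun 'I_a -> bool})%type) : R :=
  match i with inl _ => 0 | inr _ => 1 end.

Lemma Amx {R : realType} {a m : nat} (A : 'M[R]_(m, a)) k (x : 'rV[R]_a) :
  (A *m x^T) k 0 = lf (fun j => A k j) x.
Proof. by rewrite !mxE; apply: eq_bigr => j _; rewrite mxE. Qed.

Lemma PP_eq {R : realType} {a m : nat} (A : 'M[R]_(m, a)) :
  [set x | forall i, (A *m x^T) i 0 <= 0] `&` B1 (a:=a) = PP (gC A) (@hC R a m).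
Proof.
apply/seteqP; split => x /=.
  move=> [HC HB] [k|s] /=; first by rewrite -Amx.
  apply: le_trans HB; apply: ler_sum => j _; case: (s j); rewrite ?mul1r ?mulN1r.
    exact: ler_norm.
  by rewrite -normrN ler_norm.
move=> H; split.
  by move=> k; rewrite Amx; exact: (H (inl k)).
have := H (inr [ffun j => 0 <= x 0 j]) => /=; rewrite /B1 /=.
congr (_ <= _); rewrite /norm1 /lf; apply: eq_bigr => j _; rewrite ffunE.
case: ifP => Hj; first by rewrite mul1r ger0_norm.
by rewrite mulN1r ltr0_norm // ltNge Hj.
Qed.

Theorem mainTheorem9 (R : realType) (a : nat) (C : set 'rV[R]_a)
  (Yin : seq 'rV[R]_a) (delta : R) :
  polyhedral_cone C ->
  Yin != [::] ->
  (forall r, r \in Yin -> C r /\ norm1 r = 1) ->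
  0 < delta ->
  (forall d, extreme_point (C `&` B1 (a:=a)) d -> d != 0 ->
     exists2 r, r \in Yin & norm1 (d - r) <= delta) ->
  hausdorff (C `&` B1 (a:=a)) (cone_hull Yin `&` B1 (a:=a)) <= delta.
Proof.
move=> [m [A CE]] _ Yprop d0 ext.
have Peq : C `&` B1 (a:=a) = PP (gC A) (@hC R a m) by rewrite CE PP_eq.
have bnd : forall x, PP (gC A) (@hC R a m) x -> norm1 x <= 1.
  by move=> x; rewrite -Peq => -[].
have cone_sub : forall y, cone_hull Yin y -> C y.
  move=> y [lam [hl ->]]; rewrite CE => k /=.
  rewrite Amx (big_morph _ (lfD _) (lf0 _)); apply: sumr_le0 => i _.
  rewrite lfZ; apply: mulr_ge0_le0 => //.
  have [+ _] := Yprop _ (mem_nth 0 (ltn_ord i)); rewrite CE => /(_ k).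
  by rewrite Amx.
have : forall e, exists r, (extreme_point (C `&` B1 (a:=a)) e -> norm1 (e - r) <= delta)
    /\ cone_hull Yin r /\ norm1 r <= 1.
  move=> e; case: (pselect (extreme_point (C `&` B1 (a:=a)) e /\ e != 0)) => [[ex ne]|N].
    have [r rin nr] := ext e ex ne; exists r; split => //.
    have [_ n1] := Yprop r rin; split; [exact: cone_mem | by rewrite n1].
  exists 0; split; last by split; [exact: cone0 | rewrite norm10 ler01].
  move=> ex; have -> : e = 0.
    apply/eqP; apply: contrapT => ne; apply: N; split => //; exact/negP.
  by rewrite subr0 norm10 ltW.
move=> /choice [rf Hrf].
have key : forall x, (C `&` B1 (a:=a)) x ->
    exists y, (cone_hull Yin `&` B1 (a:=a)) y /\ norm1 (x - y) <= delta.
  move=> x Hx; rewrite Peq in Hx.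
  have [l [Hl [W X]]] := decomp_all bnd Hx.
  rewrite -Peq in Hl.
  exists (\sum_(p <- l) p.1 *: rf p.2); split; first split.
  - apply: cone_sum => p pin; have [p0 _] := Hl p pin; split => //.
    by have [_ [c _]] := Hrf p.2.
  - rewrite /B1 /=; apply: le_trans (norm_sum _ (fun p pin => proj1 (Hl p pin))) _.
    rewrite -W big_seq [X in _ <= X]big_seq; apply: ler_sum => p pin.
    have [p0 _] := Hl p pin; have [_ [_ n1]] := Hrf p.2.
    by rewrite -[X in _ <= X]mulr1 ler_wpM2l.
  - have -> : x - \sum_(p <- l) p.1 *: rf p.2 = \sum_(p <- l) p.1 *: (p.2 - rf p.2).
      by rewrite {1}X -sumrB; apply: eq_bigr => p _; rewrite scalerBr.
    apply: le_trans (norm_sum (fun p => p.2 - rf p.2) (fun p pin => proj1 (Hl p pin))) _.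
    rewrite -[X in _ <= X]mul1r -W mulr_suml big_seq [X in _ <= X]big_seq.
    apply: ler_sum => p pin; have [p0 ep] := Hl p pin; have [H1 _] := Hrf p.2.
    by rewrite ler_wpM2l // H1.
have inf_le : forall (x : 'rV[R]_a) (S : set 'rV[R]_a) y, S y -> dist_set x S <= norm1 (x - y).
  move=> x S y Sy; rewrite /dist_set; apply: ge_inf; last by exists y.
  by exists 0 => _ [z _ <-]; exact: norm1_ge0.
have C0 : (C `&` B1 (a:=a)) 0.
  by split; [exact: cone_sub (cone0 _) | rewrite /B1 /= norm10 ler01].
have S1 : sup [set dist_set x (cone_hull Yin `&` B1 (a:=a)) | x in C `&` B1 (a:=a)] <= delta.
  apply: ge_sup; first by exists (dist_set 0 (cone_hull Yin `&` B1 (a:=a))), 0.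
  move=> _ [x Hx <-]; have [y [Hy Hd]] := key x Hx.
  exact: le_trans (inf_le _ _ _ Hy) Hd.
have S2 : sup [set dist_set y (C `&` B1 (a:=a)) | y in cone_hull Yin `&` B1 (a:=a)] <= delta.
  have c0 : (cone_hull Yin `&` B1 (a:=a)) 0.
    by split; [exact: cone0 | rewrite /B1 /= norm10 ler01].
  apply: ge_sup; first by exists (dist_set 0 (C `&` B1 (a:=a))), 0.
  move=> _ [y [Hy1 Hy2] <-].
  have Cy : (C `&` B1 (a:=a)) y by split => //; exact: cone_sub.
  apply: le_trans (inf_le _ _ y Cy) _.
  by rewrite subrr norm10 ltW.
by rewrite /hausdorff ge_max S1 S2.
Qed.
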